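(* Suppose $D_X$ is $(2,L,R,U,\beta)$-well-behaved and $D$ satisfies the $(B,\alpha)$-geometric Tsybakov noise condition with respect to $w^\star$. Then for all $t\in[0,\frac12)$ and $\gamma>0$, \[\Pr\big(\tfrac12-\eta(x)\le t\big)\le4U\beta\Big(\frac tB\Big)^{\frac\alpha{1-\alpha}}\ln\frac e\gamma+\gamma,\] and furthermore \[\Pr\big(\tfrac12-\eta(x)\le t\big)\le4U\beta\Big(\frac tB\Big)^{\frac\alpha{1-\alpha}}\ln\Big(\frac{2}{U\beta(\frac tB)^{\frac\alpha{1-\alpha}}}\Big).\]
   Context: $D$ is a distribution on $\mathbb{R}^d\times\{-1,+1\}$ with marginal $D_X$; $w^\star$ is a unit vector and $\eta(x)=\Pr_D(y\ne\mathrm{sign}(\langle w^\star,x\rangle)\mid x)$. $D_X$ is $(2,L,R,U,\beta)$-well-behaved if for every 2-dimensional subspace $V$ the projection of $x\sim D_X$ onto $V$ (orthonormal coordinates) has density $p_V$ with $p_V(z)\ge L$ for $\|z\|_2\le R$ and $p_V\le U$ everywhere, and $\Pr(|\langle w,x\rangle|\ge t)\le\exp(1-t/\beta)$ for all unit $w$, $t>0$. $(B,\alpha)$-geometric Tsybakov noise ($B>0$, $\alpha\in(0,1]$): for all $x$, $\frac12-\eta(x)\ge\min(\frac12,B|\langle w^\star,x\rangle|^{\frac{1-\alpha}{\alpha}})$.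
   Formalization: The first bound holds for 0 < γ ≤ e only, and the second bound is asserted only when $U\beta(\frac tB)^{\frac\alpha{1-\alpha}}\le1$. The statement above fails without it. *)

(* Defs.v *)
(* R^d is modelled as d.-tuple R with the product
   (= Borel) sigma-algebra; R^2 = R * R with the product sigma-algebra. *)
From HB Require Import structures.
From mathcomp Require Import all_boot all_order all_algebra.
From mathcomp Require Import all_classical all_reals all_analysis.
Set Implicit Arguments. Unset Strict Implicit. Unset Printing Implicit Defensive.
Import Order.TTheory GRing.Theory Num.Theory.
Local Open Scope classical_set_scope.
Local Open Scope ring_scope.

Section defs.
Variable R : realType.
Variable d : nat.

Definition dotp (u x : d.-tuple R) : R := \sum_(i < d) tnth u i * tnth x i.

Definition unitv (u : d.-tuple R) : Prop := dotp u u = 1.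

Definition orthonormal2 (u1 u2 : d.-tuple R) : Prop :=
  [/\ dotp u1 u1 = 1, dotp u2 u2 = 1 & dotp u1 u2 = 0].

(* orthonormal coordinates of the projection of x onto span(u1,u2) *)
Definition proj2 (u1 u2 : d.-tuple R) (x : d.-tuple R) : R * R :=
  (dotp u1 x, dotp u2 x).

Definition is_density2 (P : probability (d.-tuple R) R) (f : d.-tuple R -> (R * R)%type)
    (p : (R * R)%type -> R) : Prop :=
  measurable_fun setT p /\ (forall z, 0 <= p z) /\
  forall A : set (R * R)%type, measurable A ->
    P (f @^-1` A) =
    (\int[(@lebesgue_measure R \x @lebesgue_measure R)%E]_(z in A) (p z)%:E)%E.

Definition well_behaved (P : probability (d.-tuple R) R) (L Rad U beta : R) : Prop :=
  [/\ 0 < L, 0 < Rad, 0 < U & 0 < beta] /\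
  (forall u1 u2, orthonormal2 u1 u2 ->
     exists p : (R * R)%type -> R, is_density2 P (proj2 u1 u2) p /\
       (forall z, Num.sqrt (z.1 ^+ 2 + z.2 ^+ 2) <= Rad -> L <= p z) /\
       (forall z, p z <= U)) /\
  (forall w, unitv w -> forall t : R, 0 < t ->
     (P [set x | (t <= `|dotp w x|)%R] <= (expR (1 - t / beta))%:E)%E).

(* label convention: true = +1, false = -1; sign(z) = +1 iff z >= 0 *)
Definition sgnb (z : R) : bool := 0 <= z.

(* eta is (a version of) the conditional probability Pr_D(y <> sign<w*,x> | x),
   and P is the x-marginal of D *)
Definition noise_fun (D : probability (d.-tuple R * bool)%type R)
    (P : probability (d.-tuple R) R) (wstar : d.-tuple R)
    (eta : d.-tuple R -> R) : Prop :=
  (forall A, measurable A -> P A = D (A `*` setT)) /\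
  measurable_fun setT eta /\ (forall x, 0 <= eta x <= 1) /\
  forall A, measurable A ->
    D [set xy | A xy.1 /\ xy.2 <> sgnb (dotp wstar xy.1)] =
    (\int[P]_(x in A) (eta x)%:E)%E.

Definition geom_tsybakov (wstar : d.-tuple R) (eta : d.-tuple R -> R)
    (B alpha : R) : Prop :=
  forall x, Num.min (1/2) (B * `|dotp wstar x| `^ ((1 - alpha) / alpha))
            <= 1/2 - eta x.

End defs.

(* Main.v *)
Require Import Defs.
From HB Require Import structures.
From mathcomp Require Import all_boot all_order all_algebra.
From mathcomp Require Import all_classical all_reals all_analysis.
From mathcomp Require Import ring lra measurable_realfun.
From mathcomp Require Import measurable_fun_approximation.
Import Order.TTheory GRing.Theory Num.Theory.
Local Open Scope classical_set_scope.
Local Open Scope ring_scope.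

Lemma mdotp (R : realType) (d : nat) (u : d.-tuple R) : measurable_fun setT (dotp u).
Proof.
rewrite /dotp; apply: measurable_sum => i.
apply: measurable_funM => //; exact: measurable_tnth.
Qed.

Lemma ln2_ge (R : realType) : 2/3 <= ln (2 : R).
Proof.
have h : expR (1/18 : R) <= 18/17.
  have := expR_ge1Dx (- (1/18) : R).
  rewrite expRN => h.
  have hp := expR_gt0 (1/18 : R).
  have hq : (0:R) < 17/18 <= (expR (1/18 : R))^-1.
    move: h; set z := (expR _)^-1 => h. lra.
  rewrite -[X in X <= _]invrK.
  have -> : (18/17 : R) = (17/18)^-1 by rewrite invf_div.
  by rewrite lef_pV2 ?posrE ?invr_gt0 //; lra.
have h2 : expR (2/3 : R) <= 2.
  have -> : (2/3 : R) = 1/18 * 12%:R by lra.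
  rewrite expRM_natr.
  apply: le_trans (_ : (18/17 : R) ^+ 12 <= 2).
    by apply: lerXn2r; rewrite ?nnegrE ?expR_ge0 //; lra.
  lra.
by rewrite -ler_expR lnK // posrE; lra.
Qed.

Lemma lebI (R : realType) (a : R) : 0 <= a ->
  (@lebesgue_measure R) [set` `[-a, a]] = (a *+ 2)%:E.
Proof.
move=> a0; rewrite lebesgue_measure_itv /=.
case: ifP.
  rewrite lte_fin => _. rewrite -EFinB; congr (_%:E); rewrite opprK mulr2n //.
rewrite lte_fin => /negbT; rewrite -leNgt => h.
have -> : a = 0 by lra.
by rewrite mul0rn.
Qed.
Lemma sum_delta (R : realType) d (j : 'I_d) (F : 'I_d -> R) :
  \sum_(i < d) (i == j)%:R * F i = F j.
Proof.
rewrite (bigD1 j) //= eqxx mul1r big1 ?addr0 // => i /negbTE ->.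
by rewrite mul0r.
Qed.

Lemma exists_orth (R : realType) d (hd : (2 <= d)%N) (w : d.-tuple R) :
  unitv w -> exists v, orthonormal2 w v.
Proof.
rewrite /unitv /dotp => hw.
have h0 : (0 < d)%N by apply: leq_trans hd.
pose j0 := Ordinal h0. pose j1 := Ordinal hd.
have hj : exists j : 'I_d, tnth w j ^+ 2 <= 1/2.
  have hle : tnth w j0 ^+ 2 + tnth w j1 ^+ 2 <= 1.
    rewrite -hw (bigD1 j0) //= (bigD1 j1) //= addrA !expr2 lerDl.
    by apply: sumr_ge0 => i _; rewrite -expr2 sqr_ge0.
  case: (lerP (tnth w j0 ^+ 2) (1/2)) => h; first by exists j0.
  by exists j1; lra.
case: hj => j hj.
set a := tnth w j in hj.
have ha : 0 < 1 - a ^+ 2 by lra.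
pose c := (Num.sqrt (1 - a ^+ 2))^-1.
have hc2 : c ^+ 2 * (1 - a ^+ 2) = 1.
  by rewrite /c exprVn sqr_sqrtr ?ltW // mulVf // gt_eqF.
exists [tuple c * ((i == j)%:R - a * tnth w i) | i < d].
rewrite /orthonormal2 /dotp; split => //.
- under eq_bigr do rewrite tnth_mktuple.
  have e : forall i : 'I_d, (c * ((i == j)%:R - a * tnth w i)) * (c * ((i == j)%:R - a * tnth w i))
     = c ^+ 2 * ((i == j)%:R * (1 - 2 * a * tnth w i)) + c ^+ 2 * a ^+ 2 * (tnth w i * tnth w i).
    move=> i; have [->|_] := eqVneq i j; rewrite /= ?mulr1n ?mulr0n /a; ring.
  under eq_bigr do rewrite e.
  rewrite big_split /= -!mulr_sumr sum_delta hw.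
  rewrite -/a; lra.
- under eq_bigr do rewrite tnth_mktuple.
  have e : forall i : 'I_d, tnth w i * (c * ((i == j)%:R - a * tnth w i))
     = c * ((i == j)%:R * tnth w i) - c * a * (tnth w i * tnth w i).
    by move=> i; ring.
  under eq_bigr do rewrite e.
  rewrite sumrB -!mulr_sumr sum_delta hw -/a; ring.
Qed.

Lemma eqle (R : realType) (x y : \bar R) : x = y -> (x <= y)%E.
Proof. by move=> ->. Qed.

Lemma main_bound (R : realType) d (hd : (2 <= d)%N) (DX : probability (d.-tuple R) R)
  (w : d.-tuple R) (L Rad U beta s gamma : R) (A : set (d.-tuple R)) :
  unitv w -> well_behaved DX L Rad U beta -> measurable A -> 0 <= s ->
  (forall x, A x -> `|dotp w x| <= s) -> 0 < gamma < expR 1 ->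
  (DX A <= (4 * U * beta * s * ln (expR 1 / gamma) + gamma)%:E)%E.
Proof.
move=> hw [[L0 R0 U0 b0] [hden htail]] mA s0 hA /andP[g0 ge].
have [v hov] := @exists_orth _ _ hd w hw.
case: (hov) => hww hvv hwv.
have [p [[mp [p0 hp]] [_ pU]]] := hden w v hov.
have lg : 0 < ln (expR 1 / gamma).
  by apply: ln_gt0; rewrite ltr_pdivlMr // mul1r.
set T := beta * ln (expR 1 / gamma).
have T0 : 0 < T by rewrite mulr_gt0.
set tail := [set x | T <= `|dotp v x|].
have mT : measurable tail.
  have mn : measurable_fun setT (fun x => `|dotp v x|).
    apply: (@measurableT_comp _ _ _ _ _ _ (@Num.Def.normr _ R) setT (dotp v)); [exact: normr_measurable | exact: mdotp].
  have := mn (@measurableT _ (d.-tuple R)) _ (measurable_itv `[T, +oo[).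
  rewrite setTI; congr measurable; apply/seteqP; split => x /=; rewrite in_itv /= andbT //.
set Bx := [set` `[-s, s]] `*` [set` `[-T, T]] : set (R * R).
have mB : measurable Bx by apply: measurableX; exact: measurable_itv.
have mfB : measurable (proj2 w v @^-1` Bx).
  have e1 := @mdotp _ _ w (@measurableT _ (d.-tuple R)) _ (measurable_itv `[-s, s]).
  have e2 := @mdotp _ _ v (@measurableT _ (d.-tuple R)) _ (measurable_itv `[-T, T]).
  rewrite setTI in e1; rewrite setTI in e2.
  exact: measurableI e1 e2.
have sub : A `<=` (proj2 w v @^-1` Bx) `|` tail.
  move=> x Ax; case: (lerP `|dotp v x| T) => h; [left|right].
    by split; rewrite /= in_itv /= -ler_norml //; apply: hA.
  by rewrite /tail /=; apply: ltW.
have H1 : (DX (proj2 w v @^-1` Bx) <= (4 * U * beta * s * ln (expR 1 / gamma))%:E)%E.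
  rewrite (hp _ mB).
  apply: (@le_trans _ _ (\int[(@lebesgue_measure R \x @lebesgue_measure R)%E]_(z in Bx) U%:E)%E).
    apply: ge0_le_integral => //.
    - by move=> z _; rewrite lee_fin.
    - by apply/measurable_EFinP; exact: measurable_funTS mp.
    - by move=> z _; rewrite lee_fin.
  have pm : ((@lebesgue_measure R \x @lebesgue_measure R)%E Bx = ((s*+2) * (T*+2))%:E)%E.
    rewrite /Bx product_measure1E; try exact: measurable_itv.
    by rewrite EFinM -(@lebI R s s0) -(@lebI R T (ltW T0)).
  have ic := integral_cst (@lebesgue_measure R \x @lebesgue_measure R)%E mB U%:E.
  move: ic; set M := (X in (_ = (U%:E * X)%E) -> _).
  have -> : M = ((s*+2)*(T*+2))%:E by exact: pm.
  move=> ic.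
  Timeout 20 rewrite ic.
  rewrite -EFinM lee_fin /T.
  by rewrite le_eqVlt; apply/orP; left; apply/eqP; ring.
have H2 : (DX tail <= gamma%:E)%E.
  have := htail v hvv T T0.
  have -> : expR (1 - T / beta) = gamma.
    have -> : T / beta = ln (expR 1 / gamma) by rewrite /T mulrAC divff ?gt_eqF // mul1r.
    rewrite ln_div ?posrE ?expR_gt0 // expRK.
    by rewrite opprB addrC subrK lnK // posrE.
  done.
apply: (@le_trans _ _ (DX ((proj2 w v @^-1` Bx) `|` tail))).
  by apply: le_measure; rewrite ?inE //; exact: measurableU.
apply: (le_trans (measureU2 _ _ _)) => //.
rewrite EFinD; exact: leeD H1 H2.
Qed.
Lemma fin1 (R : realType) (x : R) : 0 < x -> 4 * x < expR 1 ->
  4 * x * ln (expR 1 / (4 * x)) + 4 * x <= 4 * x * ln (2 / x).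
Proof.
move=> x0 hx.
have l2 := ln2_ge R.
rewrite ln_div ?posrE ?expR_gt0 ?mulr_gt0 // expRK.
rewrite lnM ?posrE // ?mulr_gt0 //.
have -> : (4 : R) = 2 * 2 by lra.
rewrite lnM ?posrE // ln_div ?posrE //.
nra.
Qed.

Lemma fin2 (R : realType) (x : R) : 0 < x -> x <= 1 -> expR 1 <= 4 * x ->
  1 <= 4 * x * ln (2 / x).
Proof.
move=> x0 x1 hx.
have l2 := ln2_ge R.
have e2 : 2 <= expR (1 : R) by have := expR_ge1Dx (1 : R); lra.
have : ln 2 <= ln (2 / x).
  rewrite ler_ln ?posrE ?divr_gt0 //.
  rewrite ler_pdivlMr //; nra.
nra.
Qed.

Theorem lemma9 (R : realType) (d : nat) (hd : (2 <= d)%N)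
  (D : probability (d.-tuple R * bool)%type R) (DX : probability (d.-tuple R) R)
  (wstar : d.-tuple R) (eta : d.-tuple R -> R)
  (L Rad U beta B alpha : R) :
  unitv wstar ->
  well_behaved DX L Rad U beta ->
  noise_fun D DX wstar eta ->
  0 < B -> 0 < alpha < 1 ->
  geom_tsybakov wstar eta B alpha ->
  forall t : R, 0 <= t < 1/2 ->
  let s := (t / B) `^ (alpha / (1 - alpha)) in
  (forall gamma : R, 0 < gamma <= expR 1 ->
     (DX [set x | (1/2 - eta x <= t)%R] <=
       (4 * U * beta * s * ln (expR 1 / gamma) + gamma)%:E)%E) /\
  (U * beta * s <= 1 ->
     (DX [set x | (1/2 - eta x <= t)%R] <=
       (4 * U * beta * s * ln (2 / (U * beta * s)))%:E)%E).
Proof.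
move=> hw wb nf B0 /andP[a0 a1] hts t /andP[t0 th] s.
have wb' := wb.
case: wb => [[L0 R0 U0 b0] _].
case: nf => [_ [meta [eta01 _]]].
set A := [set x | 1/2 - eta x <= t].
have mA : measurable A.
  have := meta (@measurableT _ (d.-tuple R)) _ (measurable_itv `[1/2 - t, +oo[).
  rewrite setTI; congr measurable; apply/seteqP; split => x /=;
    rewrite in_itv /= andbT /A /= => h; lra.
have s0 : 0 <= s by apply: powR_ge0.
have hAs : forall x, A x -> `|dotp wstar x| <= s.
  move=> x Ax; have h := hts x.
  rewrite /A /= in Ax.
  set P := `|dotp wstar x| `^ ((1 - alpha) / alpha) in h.
  have hP : B * P <= t.
    move: h; rewrite ge_min => /orP[h|h]; lra.
  have hP' : P <= t / B by rewrite ler_pdivlMr // mulrC.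
  have e : (1 - alpha) / alpha * (alpha / (1 - alpha)) = 1.
    rewrite mulrA divfK ?gt_eqF // divff // gt_eqF //; lra.
  have -> : `|dotp wstar x| = P `^ (alpha / (1 - alpha)).
    by rewrite /P -powRrM e powRr1.
  apply: ge0_ler_powR => //.
  - apply: divr_ge0; lra.
  - by rewrite nnegrE powR_ge0.
  - by rewrite nnegrE divr_ge0 // ltW.
have MB : forall g, 0 < g < expR 1 ->
    (DX A <= (4 * U * beta * s * ln (expR 1 / g) + g)%:E)%E.
  by move=> g hg; exact: (@main_bound R d hd DX wstar L Rad U beta s g A hw wb' mA s0 hAs hg).
have le1 : (DX A <= 1)%E by apply: probability_le1.
have e2 : 2 <= expR (1 : R) by have := expR_ge1Dx (1 : R); lra.
split.
  move=> g /andP[g0 ge]; case: (ltrP g (expR 1)) => hg.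
    by apply: MB; rewrite g0.
  have eg : g = expR 1 by lra.
  apply: (le_trans le1).
  rewrite eg divff ?gt_eqF ?expR_gt0 // ln1 mulr0 add0r lee_fin; lra.
move=> hx.
have [hs0|hs0] := eqVneq s 0.
  rewrite hs0 !mulr0 mul0r.
  apply/lee_addgt0Pr => e e0; rewrite add0e.
  have hm : 0 < Num.min e 1 < expR 1.
    rewrite lt_min e0 ltr01 /=; apply: (@le_lt_trans _ _ 1); [by rewrite ge_min lexx orbT|lra].
  apply: (le_trans (MB _ hm)).
  by rewrite hs0 !mulr0 mul0r add0r lee_fin ge_min lexx.
have sp : 0 < s by rewrite lt_def hs0 s0.
set x := U * beta * s in hx *.
have x0 : 0 < x by rewrite /x !mulr_gt0.
have -> : 4 * U * beta * s = 4 * x by rewrite /x; ring.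
case: (ltrP (4 * x) (expR 1)) => h4.
  have hm : 0 < 4 * x < expR 1 by rewrite h4 andbT mulr_gt0.
  apply: (le_trans (MB _ hm)).
  have -> : 4 * U * beta * s = 4 * x by rewrite /x; ring.
  by rewrite lee_fin; apply: fin1.
apply: (le_trans le1); rewrite lee_fin; exact: fin2.
Qed.
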